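(* Let $n\ge 1$ and $d\ge 2$ be integers. Consider the $(n,d)$ random access code task: Alice receives a string $x=x_1x_2\cdots x_n$ with each $x_i\in\{1,\dots,d\}$, drawn uniformly from all $d^n$ strings; Bob receives $y\in\{1,\dots,n\}$ uniformly at random and outputs $z\in\{1,\dots,d\}$. A classical protocol consists of an encoding, i.e. conditional probability distributions $p_e(m|x)$ over messages $m$ from a finite set of arbitrary size, and a decoding, i.e. conditional probability distributions $p_d(z|y,m)$; it yields $p(z|x,y)=\sum_m p_e(m|x)p_d(z|y,m)$. Its success metric is $$\mathcal{S}_C(n,d)=\frac{1}{n d^n}\sum_{x,y} p(z=x_y\,|\,x,y),$$ and its distinguishability is $$\mathcal{D}_C=\frac{1}{d^n}\sum_m \max_x p_e(m|x).$$ Then every classical protocol satisfies $$n\,\mathcal{S}_C(n,d)+1-n\le \mathcal{D}_C.$$ *)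

(* Defs.v *)
From mathcomp Require Import all_boot all_order all_algebra.
Set Implicit Arguments. Unset Strict Implicit. Unset Printing Implicit Defensive.
Import Order.TTheory GRing.Theory Num.Theory.
Local Open Scope ring_scope.

(* Alice's input strings x = x_1...x_n with x_i in {1..d}, encoded as
   finite functions 'I_n -> 'I_d (symbols 0..d-1). *)
Definition string (n d : nat) := {ffun 'I_n -> 'I_d}.

Definition cond_distr (R : numDomainType) (A B : finType) (f : A -> B -> R) : Prop :=
  (forall a b, 0 <= f a b) /\ (forall a, \sum_(b : B) f a b = 1).

Definition prot_prob (R : numDomainType) (n d : nat) (M : finType)
  (pe : string n d -> M -> R) (pd : 'I_n * M -> 'I_d -> R)
  (x : string n d) (y : 'I_n) (z : 'I_d) : R :=
  \sum_(m : M) pe x m * pd (y, m) z.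

Definition success (R : numFieldType) (n d : nat) (M : finType)
  (pe : string n d -> M -> R) (pd : 'I_n * M -> 'I_d -> R) : R :=
  (n * d ^ n)%:R^-1 * \sum_(x : string n d) \sum_(y : 'I_n) prot_prob pe pd x y (x y).

(* D_C = 1/d^n sum_m max_x pe(m|x)  (max of nonnegative reals, seeded with 0) *)
Definition distinguishability (R : numFieldType) (n d : nat) (M : finType)
  (pe : string n d -> M -> R) : R :=
  (d ^ n)%:R^-1 * \sum_(m : M) \big[Num.max/0]_(x : string n d) pe x m.

(* Main.v *)
Require Import Defs.
From mathcomp Require Import all_boot all_order all_algebra.
From mathcomp Require Import ring lra zify.
Import Order.TTheory GRing.Theory Num.Theory.
Local Open Scope ring_scope.

Lemma weier (R : realFieldType) (I : Type) (a : I -> R) (s : seq I) :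
  (forall i, 0 <= a i <= 1) ->
  [/\ 0 <= \prod_(i <- s) a i, \prod_(i <- s) a i <= 1 &
      1 - \sum_(i <- s) (1 - a i) <= \prod_(i <- s) a i].
Proof.
move=> ha; elim: s => [|i s [h0 h1 h2]]; first by rewrite !big_nil; split; lra.
rewrite !big_cons; have /andP[a0 a1] := ha i; split.
- exact: mulr_ge0.
- by rewrite mulr_ile1.
- nra.
Qed.

Lemma lemax (R : realFieldType) (T : finType) (f : T -> R) x :
  f x <= \big[Num.max/0]_(y : T) f y.
Proof. by rewrite (bigD1 x) //= le_max lexx. Qed.

Theorem theorem1 (R : realFieldType) (n d : nat) (M : finType)
  (pe : string n d -> M -> R) (pd : 'I_n * M -> 'I_d -> R) :
  (1 <= n)%N -> (2 <= d)%N ->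
  cond_distr pe -> cond_distr pd ->
  n%:R * success pe pd + 1 - n%:R <= distinguishability pe.
Proof.
move=> n1 d2 [pe0 pe1] [pd0 pd1].
have dn0 : (d ^ n)%:R != 0 :> R by rewrite pnatr_eq0 expn_eq0; apply/nandP; left; rewrite -lt0n; lia.
have n0 : n%:R != 0 :> R by rewrite pnatr_eq0 -lt0n.
pose W m := \big[Num.max/0]_(x : string n d) pe x m.
pose Q m (x : string n d) := \prod_(y : 'I_n) pd (y, m) (x y).
pose T := \sum_(x : string n d) \sum_(y : 'I_n) prot_prob pe pd x y (x y).
have -> : n%:R * success pe pd + 1 - n%:R = (d ^ n)%:R^-1 *
   (T + \sum_(x : string n d) \sum_(m : M) pe x m * (1 - n%:R)).
  rewrite /success natrM invfM -/T.
  under eq_bigr do rewrite -big_distrl /= pe1 mul1r.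
  rewrite sumr_const card_ffun !card_ord -mulr_natr.
  field; by rewrite dn0 n0.
rewrite /distinguishability ler_pM2l ?invr_gt0 ?ltr0n ?expn_gt0 ?(leq_trans _ d2) //.
have -> : T + \sum_(x : string n d) \sum_(m : M) pe x m * (1 - n%:R) =
   \sum_(m : M) \sum_(x : string n d) pe x m *
      (1 - \sum_(y : 'I_n) (1 - pd (y, m) (x y))).
  rewrite /T -big_split /= exchange_big; apply: eq_bigr => x _.
  rewrite /prot_prob exchange_big -big_split /=; apply: eq_bigr => m _.
  rewrite sumrB sumr_const card_ord -mulr_sumr; ring.
apply: ler_sum => m _.
apply: (@le_trans _ _ (\sum_(x : string n d) W m * Q m x)).
  apply: ler_sum => x _.
  have hw : forall i, 0 <= pd (i, m) (x i) <= 1.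
    move=> i; rewrite pd0 /=; rewrite -(pd1 (i, m)) (bigD1 (x i)) //= lerDl.
    by apply: sumr_ge0 => *; apply: pd0.
  have [q0 _ q2] := @weier R _ (fun i => pd (i, m) (x i)) (index_enum 'I_n) hw.
  apply: (@le_trans _ _ (pe x m * Q m x)).
    by apply: ler_wpM2l; [apply: pe0 | exact: q2].
  by apply: ler_wpM2r; [exact: q0 | exact: lemax].
rewrite -mulr_sumr /Q -(bigA_distr_bigA (fun y z => pd (y, m) z)) /=.
rewrite big1 ?mulr1 // => y _; exact: pd1.
Qed.
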